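(* If $X$ is a core compact well-filtered space, then the upper Vietoris topology and the Scott topology on $\mathsf{K}(X)$ coincide.
   Context: Spaces are $T_0$; specialization order $x\le y$ iff $x\in\overline{\{y\}}$; saturated = upper set. $\mathsf{K}(X)$ = nonempty compact saturated subsets ordered by reverse inclusion. Scott topology on a poset: upper sets $U$ such that every directed $D$ whose supremum exists and lies in $U$ meets $U$. Upper Vietoris topology on $\mathsf{K}(X)$: base $\Box U=\{K:K\subseteq U\}$, $U$ open. Well-filtered: for open $U$ and $\mathcal K\subseteq\mathsf{K}(X)$ filtered under inclusion, $\bigcap\mathcal K\subseteq U$ implies some $K\in\mathcal K$ lies in $U$. Core compact: the lattice of open sets of $X$ is a continuous lattice. *)

(* Defs.v *)
From Stdlib Require Import List.

Set Implicit Arguments.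

Definition subset {A : Type} (P Q : A -> Prop) : Prop := forall a, P a -> Q a.

Definition is_topology {X : Type} (O : (X -> Prop) -> Prop) : Prop :=
  O (fun _ => True) /\
  (forall U V, O U -> O V -> O (fun x => U x /\ V x)) /\
  (forall F : (X -> Prop) -> Prop, (forall U, F U -> O U) ->
     O (fun x => exists U, F U /\ U x)).

Definition T0 {X : Type} (O : (X -> Prop) -> Prop) : Prop :=
  forall x y, (forall U, O U -> (U x <-> U y)) -> x = y.

Definition closure {X : Type} (O : (X -> Prop) -> Prop) (A : X -> Prop) (x : X) : Prop :=
  forall U, O U -> U x -> exists y, U y /\ A y.

Definition spec_le {X : Type} (O : (X -> Prop) -> Prop) (x y : X) : Prop :=
  closure O (fun z => z = y) x.

Definition saturated {X : Type} (O : (X -> Prop) -> Prop) (A : X -> Prop) : Prop :=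
  forall x y, A x -> spec_le O x y -> A y.

Definition compact {X : Type} (O : (X -> Prop) -> Prop) (K : X -> Prop) : Prop :=
  forall F : (X -> Prop) -> Prop, (forall U, F U -> O U) ->
    subset K (fun x => exists U, F U /\ U x) ->
    exists l : list (X -> Prop), (forall U, In U l -> F U) /\
      subset K (fun x => exists U, In U l /\ U x).

Definition KX {X : Type} (O : (X -> Prop) -> Prop) (K : X -> Prop) : Prop :=
  (exists x, K x) /\ compact O K /\ saturated O K.

Definition K_le {X : Type} (K1 K2 : X -> Prop) : Prop := subset K2 K1.

(* Subsets of K(X) are predicates on (X -> Prop), meant to be contained in KX O. *)

(* Upper Vietoris topology: generated by the base Box U = {K in K(X) | K ⊆ U}, U open;
   a set is open iff it is a union of basic open sets. *)
Definition upper_vietoris_open {X : Type} (O : (X -> Prop) -> Prop)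
    (W : (X -> Prop) -> Prop) : Prop :=
  subset W (KX O) /\
  forall K, W K -> exists U, O U /\ subset K U /\
    (forall K', KX O K' -> subset K' U -> W K').

Definition directed_K {X : Type} (O : (X -> Prop) -> Prop) (D : (X -> Prop) -> Prop) : Prop :=
  subset D (KX O) /\ (exists K, D K) /\
  forall K1 K2, D K1 -> D K2 -> exists K3, D K3 /\ K_le K1 K3 /\ K_le K2 K3.

Definition is_sup_K {X : Type} (O : (X -> Prop) -> Prop) (D : (X -> Prop) -> Prop)
    (S : X -> Prop) : Prop :=
  KX O S /\ (forall K, D K -> K_le K S) /\
  (forall S', KX O S' -> (forall K, D K -> K_le K S') -> K_le S S').

Definition scott_open_K {X : Type} (O : (X -> Prop) -> Prop)
    (W : (X -> Prop) -> Prop) : Prop :=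
  subset W (KX O) /\
  (forall K1 K2, W K1 -> KX O K2 -> K_le K1 K2 -> W K2) /\
  (forall D S, directed_K O D -> is_sup_K O D S -> W S -> exists K, D K /\ W K).

Definition well_filtered {X : Type} (O : (X -> Prop) -> Prop) : Prop :=
  forall (U : X -> Prop) (F : (X -> Prop) -> Prop),
    O U -> subset F (KX O) ->
    (exists K, F K) ->
    (forall K1 K2, F K1 -> F K2 -> exists K3, F K3 /\ subset K3 K1 /\ subset K3 K2) ->
    subset (fun x => forall K, F K -> K x) U ->
    exists K, F K /\ subset K U.

Definition way_below {X : Type} (O : (X -> Prop) -> Prop) (U V : X -> Prop) : Prop :=
  forall F : (X -> Prop) -> Prop,
    (forall W, F W -> O W) ->
    (exists W, F W) ->
    (forall W1 W2, F W1 -> F W2 -> exists W3, F W3 /\ subset W1 W3 /\ subset W2 W3) ->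
    subset V (fun x => exists W, F W /\ W x) ->
    exists W, F W /\ subset U W.

(* core compact: the open-set lattice is continuous, i.e. every open V is the
   (directed) join, i.e. union, of the opens way below it *)
Definition core_compact {X : Type} (O : (X -> Prop) -> Prop) : Prop :=
  forall V, O V -> forall x, V x -> exists U, O U /\ way_below O U V /\ U x.

(* Main.v *)
Require Import Defs.
From Stdlib Require Import List Arith Lia Classical ClassicalEpsilon FunctionalExtensionality PropExtensionality.
From mathcomp Require classical_sets.

Lemma zorn_wrap (T:Type) (P : (T->Prop)->Prop) :
  (forall F : (T -> Prop) -> Prop, (forall A, F A -> P A) ->
     (forall A B, F A -> F B -> (forall x, A x -> B x) \/ (forall x, B x -> A x)) ->
     P (fun x => exists A, F A /\ A x)) ->
  exists A, P A /\ forall B, (forall x, A x -> B x) -> ~ (forall x, B x -> A x) -> ~ P B.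
Proof.
  intros H.
  destruct (@classical_sets.Zorn_bigcup T P) as [A [HA Hmax]].
  - intros F HF Htot.
    assert (E : classical_sets.bigcup F (fun X => X) = (fun x => exists A, F A /\ A x)).
    { apply functional_extensionality; intro x. apply propositional_extensionality.
      unfold classical_sets.bigcup, classical_sets.mkset. split.
      - intros [i Hi Hx]. eauto.
      - intros [i [Hi Hx]]. econstructor; eauto. }
    rewrite E. apply H. exact HF. intros A B HA HB. exact (Htot A B HA HB).
  - exists A. split; auto. intros B H1 H2. apply Hmax. split; auto.
Qed.

Section Topo.
Variable X : Type.
Variable O : (X -> Prop) -> Prop.
Hypothesis HT : is_topology O.

Lemma open_ext U V : O U -> (forall x, U x <-> V x) -> O V.
Proof.
  intros HU H. replace V with U; auto.
  apply functional_extensionality; intro x; apply propositional_extensionality; auto.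
Qed.

Lemma open_union (F : (X -> Prop) -> Prop) : (forall U, F U -> O U) -> O (fun x => exists U, F U /\ U x).
Proof. destruct HT as [_ [_ H]]. apply H. Qed.

Lemma open_empty : O (fun _ => False).
Proof.
  apply open_ext with (U := fun x => exists U : X -> Prop, False /\ U x).
  - apply open_union. tauto.
  - firstorder.
Qed.

Lemma open_full : O (fun _ => True).
Proof. destruct HT as [H _]. exact H. Qed.

Lemma open_inter U V : O U -> O V -> O (fun x => U x /\ V x).
Proof. destruct HT as [_ [H _]]. apply H. Qed.

Lemma open_bin U V : O U -> O V -> O (fun x => U x \/ V x).
Proof.
  intros HU HV.
  apply open_ext with (U := fun x => exists W, (W = U \/ W = V) /\ W x).
  - apply open_union. intros W [-> | ->]; auto.
  - intro x; split.
    + intros [W [[-> | ->] Hx]]; auto.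
    + intros [Hx | Hx]; eauto.
Qed.

Lemma open_list (l : list (X -> Prop)) : (forall U, In U l -> O U) -> O (fun x => exists U, In U l /\ U x).
Proof. apply open_union. Qed.

Lemma spec_refl x : spec_le O x x.
Proof. intros U _ Hx. eauto. Qed.

Lemma spec_open U x y : O U -> U x -> spec_le O x y -> U y.
Proof. intros HU Hx Hs. destruct (Hs U HU Hx) as [z [Hz ->]]. exact Hz. Qed.

Lemma spec_trans x y z : spec_le O x y -> spec_le O y z -> spec_le O x z.
Proof. intros H1 H2 U HU Hx. exists z; split; auto. apply (spec_open U y z HU); auto.
  apply (spec_open U x y HU); auto. Qed.

Lemma wb_sub U V : way_below O U V -> O V -> subset U V.
Proof.
  intros H HV. destruct (H (fun W => W = V)) as [W [-> HW]]; auto.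
  - intros W ->; auto.
  - eauto.
  - intros W1 W2 -> ->. exists V. unfold subset. auto.
  - intros x Hx. eauto.
Qed.

Lemma wb_mono_l U U' V : subset U' U -> way_below O U V -> way_below O U' V.
Proof.
  intros Hs H F HF Hne Hd Hc. destruct (H F HF Hne Hd Hc) as [W [HW HUW]].
  exists W; split; auto. intros x Hx; auto.
Qed.

Lemma wb_mono_r U V V' : subset V V' -> way_below O U V -> way_below O U V'.
Proof.
  intros Hs H F HF Hne Hd Hc. apply (H F HF Hne Hd).
  intros x Hx. apply Hc. auto.
Qed.

Lemma wb_empty V : way_below O (fun _ => False) V.
Proof. intros F _ [W HW] _ _. exists W. split; auto. intros x []. Qed.

Lemma wb_union2 U1 U2 V : way_below O U1 V -> way_below O U2 V -> way_below O (fun x => U1 x \/ U2 x) V.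
Proof.
  intros H1 H2 F HF Hne Hd Hc.
  destruct (H1 F HF Hne Hd Hc) as [W1 [HW1 S1]].
  destruct (H2 F HF Hne Hd Hc) as [W2 [HW2 S2]].
  destruct (Hd W1 W2 HW1 HW2) as [W3 [HW3 [T1 T2]]].
  exists W3; split; auto. intros x [Hx|Hx]; auto.
Qed.

Lemma wb_list V (l : list (X -> Prop)) : (forall U, In U l -> way_below O U V) ->
  way_below O (fun x => exists U, In U l /\ U x) V.
Proof.
  induction l as [|U l IH]; intros H.
  - apply wb_mono_l with (U := fun _ => False). intros x [U [[] _]]. apply wb_empty.
  - apply wb_mono_l with (U := fun x => U x \/ exists U, In U l /\ U x).
    + intros x [W [[-> | Hin] Hx]]; auto. right; eauto.
    + apply wb_union2. apply H; simpl; auto. apply IH. intros W HW; apply H; simpl; auto.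
Qed.

Hypothesis HC : core_compact O.
Hypothesis HWF : well_filtered O.

Lemma compact_wb K V : compact O K -> O V -> subset K V ->
  exists U, O U /\ subset K U /\ way_below O U V.
Proof.
  intros HK HV HKV.
  destruct (HK (fun U => O U /\ way_below O U V)) as [l [Hl Hcov]].
  - intros U [HU _]; auto.
  - intros x Hx. destruct (HC V HV x (HKV x Hx)) as [U [HU [Hw Hx']]]. eauto.
  - exists (fun x => exists U, In U l /\ U x). split; [|split].
    + apply open_list. intros U HU. apply Hl; auto.
    + exact Hcov.
    + apply wb_list. intros U HU. apply Hl; auto.
Qed.

Lemma interp U V : O V -> way_below O U V -> exists W, O W /\ way_below O U W /\ way_below O W V.
Proof.
  intros HV H.
  destruct (H (fun W' => O W' /\ exists W, O W /\ way_below O W' W /\ way_below O W V))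
    as [W' [[HW' [W [HW [H1 H2]]]] HUW']].
  - intros W [HW _]; auto.
  - exists (fun _ => False). split. apply open_empty.
    exists (fun _ => False). split. apply open_empty. split; apply wb_empty.
  - intros W1 W2 [HO1 [V1 [HV1 [A1 B1]]]] [HO2 [V2 [HV2 [A2 B2]]]].
    exists (fun x => W1 x \/ W2 x). split; [split|split].
    + apply open_bin; auto.
    + exists (fun x => V1 x \/ V2 x). split; [apply open_bin; auto|split].
      * apply wb_union2.
        -- apply wb_mono_r with V1; auto. intros x Hx; auto.
        -- apply wb_mono_r with V2; auto. intros x Hx; auto.
      * apply wb_union2; auto.
    + intros x Hx; auto.
    + intros x Hx; auto.
  - intros x Hx. destruct (HC V HV x Hx) as [W [HW [Hw Hxw]]].
    destruct (HC W HW x Hxw) as [W' [HW' [Hw' Hxw']]].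
    exists W'. split; auto. split; auto. exists W; auto.
  - exists W. split; auto. split; auto. apply wb_mono_l with W'; auto.
Qed.

Lemma chain_mono (Wn : nat -> X -> Prop) : (forall n, O (Wn n)) ->
  (forall n, way_below O (Wn (S n)) (Wn n)) ->
  forall n m, n <= m -> subset (Wn m) (Wn n).
Proof.
  intros HO Hw n m Hle. induction Hle.
  - intros x Hx; auto.
  - intros x Hx. apply IHHle. apply (wb_sub (Wn (S m)) (Wn m)); auto.
Qed.
Lemma chain_lemma (Wn : nat -> X -> Prop) (G : X -> Prop) :
  (forall n, O (Wn n)) -> (forall n, way_below O (Wn (S n)) (Wn n)) -> O G ->
  subset (fun x => forall n, Wn n x) G -> exists n, subset (Wn n) G.
Proof.
  intros HO Hw HG HQ.
  apply NNPP. intro Hno.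
  assert (Hn : forall n, ~ subset (Wn n) G) by (intros n Hs; apply Hno; eauto).
  clear Hno.
  pose (P' := fun A : X -> Prop => O (fun x => A x \/ G x) /\
                forall n, ~ subset (Wn n) (fun x => A x \/ G x)).
  destruct (@zorn_wrap X P') as [A [[HAo HAn] Hmax]].
  - intros F HF Htot. split.
    + apply open_ext with (U := fun x => exists B, (B = G \/ exists A, F A /\ B = (fun y => A y \/ G y)) /\ B x).
      * apply open_union. intros B [-> | [A [HA ->]]]; auto. apply (HF A HA).
      * intro x; split.
        -- intros [B [[-> | [A [HA ->]]] Hx]]; auto. destruct Hx; eauto.
        -- intros [[A [HA Hx]] | Hx].
           ++ exists (fun y => A y \/ G y). split; eauto.
           ++ exists G; auto.
    + intros n Hs.
      destruct (Hw n (fun B => B = G \/ exists A, F A /\ B = (fun y => A y \/ G y))) as [B [HB HsB]].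
      * intros B [-> | [A [HA ->]]]; auto. apply (HF A HA).
      * eauto.
      * intros B1 B2 H1 H2.
        destruct H1 as [-> | [A1 [HA1 ->]]]; destruct H2 as [-> | [A2 [HA2 ->]]].
        -- exists G. split; auto. split; intros x Hx; auto.
        -- exists (fun y => A2 y \/ G y). split; [right; eauto|]. split; intros x Hx; auto.
        -- exists (fun y => A1 y \/ G y). split; [right; eauto|]. split; intros x Hx; auto.
        -- destruct (Htot A1 A2 HA1 HA2) as [S12 | S21].
           ++ exists (fun y => A2 y \/ G y). split; [right; eauto|].
              split; intros x [Hx|Hx]; auto.
           ++ exists (fun y => A1 y \/ G y). split; [right; eauto|].
              split; intros x [Hx|Hx]; auto.
      * intros x Hx. destruct (Hs x Hx) as [[A [HA HAx]] | Hx'].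
        -- exists (fun y => A y \/ G y). split; auto. right; eauto.
        -- exists G; auto.
      * destruct HB as [-> | [A [HA ->]]].
        -- apply (Hn (S n)); auto.
        -- apply (proj2 (HF A HA) (S n)); auto.
  - pose (P := fun x => A x \/ G x).
    assert (Hb : forall n, exists x, Wn n x /\ ~ P x).
    { intro n. apply NNPP; intro Hc. apply (HAn n). intros x Hx.
      apply NNPP; intro Hpx. apply Hc. eauto. }
    pose (b := fun n => proj1_sig (constructive_indefinite_description _ (Hb n))).
    assert (Hbp : forall n, Wn n (b n) /\ ~ P (b n)).
    { intro n. unfold b. destruct (constructive_indefinite_description _ (Hb n)); auto. }
    assert (Hstar : forall U k, O U -> U (b k) -> exists n0, forall n, n0 <= n -> U (b n)).
    { intros U k HU Hk.
      assert (HnP : ~ P' (fun x => A x \/ U x)).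
      { apply Hmax.
        - intros x Hx; auto.
        - intro Hs. destruct (Hbp k) as [_ Hk']. apply Hk'. left. apply Hs. auto. }
      assert (Hop : O (fun x => (A x \/ U x) \/ G x)).
      { apply open_ext with (U := fun x => (A x \/ G x) \/ U x).
        apply open_bin; auto. intro x; tauto. }
      assert (Hex : exists n0, subset (Wn n0) (fun x => (A x \/ U x) \/ G x)).
      { apply NNPP; intro Hc. apply HnP. split; auto. intros n Hs. apply Hc; eauto. }
      destruct Hex as [n0 Hn0]. exists n0. intros n Hle.
      destruct (Hbp n) as [Hbn HbP].
      assert (Hm : Wn n0 (b n)) by (apply (chain_mono Wn HO Hw n0 n Hle); auto).
      destruct (Hn0 _ Hm) as [[Ha|Hu]|Hg]; auto.
      - exfalso; apply HbP; left; auto.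
      - exfalso; apply HbP; right; auto. }
    pose (K := fun N x => exists n, N <= n /\ spec_le O (b n) x).
    assert (HKX : forall N, KX O (K N)).
    { intro N. split; [|split].
      - exists (b N). exists N. split; auto. apply spec_refl.
      - intros F HF Hcov.
        destruct (Hcov (b N)) as [U0 [HU0 HU0b]].
        { exists N. split; auto. apply spec_refl. }
        destruct (Hstar U0 N (HF U0 HU0) HU0b) as [n0 Hn0].
        assert (Hl : forall m, exists l, (forall U, In U l -> F U) /\
                   forall n, N <= n -> n < m -> exists U, In U l /\ U (b n)).
        { induction m as [|m [l [Hl1 Hl2]]].
          - exists nil. split. intros U []. intros n _ Hlt. lia.
          - destruct (le_lt_dec N m) as [Hle|Hlt].
            + destruct (Hcov (b m)) as [Um [HUm HUmb]].
              { exists m. split; auto. apply spec_refl. }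
              exists (Um :: l). split.
              * intros U [<-|HU]; auto.
              * intros n HNn Hnm. destruct (Nat.eq_dec n m) as [->|Hne].
                -- exists Um. simpl; auto.
                -- destruct (Hl2 n HNn) as [U [HU HUb]]; [lia|]. exists U; simpl; auto.
            + exists l. split; auto. intros n HNn Hnm. apply Hl2; lia. }
        destruct (Hl n0) as [l [Hl1 Hl2]].
        exists (U0 :: l). split.
        + intros U [<-|HU]; auto.
        + intros x [n [HNn Hsp]].
          destruct (le_lt_dec n0 n) as [Hle|Hlt].
          * exists U0. split; simpl; auto. apply (spec_open U0 (b n) x); auto.
          * destruct (Hl2 n HNn Hlt) as [U [HU HUb]]. exists U. split; simpl; auto.
            apply (spec_open U (b n) x); auto.
      - intros x y [n [HNn Hsp]] Hxy. exists n. split; auto. apply spec_trans with x; auto. }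
    destruct (HWF P (fun K' => exists N, K' = K N)) as [K' [[N ->] HKP]].
    + unfold P. auto.
    + intros K' [N ->]. auto.
    + exists (K 0). eauto.
    + intros K1 K2 [N1 ->] [N2 ->]. exists (K (max N1 N2)). split; eauto.
      split; intros x [n [Hn1 Hs]]; exists n; split; auto; lia.
    + intros x Hx. right. apply HQ. intro N.
      destruct (Hx (K N) (ex_intro _ N eq_refl)) as [n [HNn Hsp]].
      apply (chain_mono Wn HO Hw N n HNn).
      apply (spec_open (Wn n) (b n) x); auto. apply Hbp.
    + destruct (Hbp N) as [_ HnP]. apply HnP. apply HKP. exists N. split; auto. apply spec_refl.
Qed.
Lemma local_compact K V : compact O K -> O V -> subset K V ->
  exists U Q, O U /\ subset K U /\ subset U Q /\ subset Q V /\ compact O Q /\ saturated O Q.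
Proof.
  intros HK HV HKV.
  destruct (compact_wb K V HK HV HKV) as [U0 [HU0 [HKU0 HwU0]]].
  pose (St := {W : X -> Prop | O W /\ way_below O U0 W}).
  assert (step : forall s : St, exists s' : St, way_below O (proj1_sig s') (proj1_sig s)).
  { intros [W [HW Hw]]. destruct (interp U0 W HW Hw) as [W' [HW' [H1 H2]]].
    exists (exist _ W' (conj HW' H1)). simpl. auto. }
  pose (g := fun s => proj1_sig (constructive_indefinite_description _ (step s))).
  assert (Hg : forall s, way_below O (proj1_sig (g s)) (proj1_sig s)).
  { intro s. unfold g. destruct (constructive_indefinite_description _ (step s)); auto. }
  pose (s0 := exist (fun W => O W /\ way_below O U0 W) V (conj HV HwU0) : St).
  pose (Wn := fun n => proj1_sig (Nat.iter n g s0)).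
  assert (HO : forall n, O (Wn n)).
  { intro n. unfold Wn. exact (proj1 (proj2_sig (Nat.iter n g s0))). }
  assert (HU : forall n, subset U0 (Wn n)).
  { intro n. unfold Wn. apply wb_sub.
    exact (proj2 (proj2_sig (Nat.iter n g s0))). exact (proj1 (proj2_sig (Nat.iter n g s0))). }
  assert (Hw : forall n, way_below O (Wn (S n)) (Wn n)).
  { intro n. unfold Wn. simpl. apply Hg. }
  exists U0, (fun x => forall n, Wn n x). split; [exact HU0|split; [exact HKU0|split; [|split; [|split]]]].
  - intros x Hx n. apply HU; auto.
  - intros x Hx. exact (Hx 0).
  - intros F HF Hcov.
    destruct (chain_lemma Wn (fun x => exists U, F U /\ U x) HO Hw (open_union F HF) Hcov)
      as [n Hn].
    destruct (Hw n (fun W => exists l, (forall U, In U l -> F U) /\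
                       W = (fun x => exists U, In U l /\ U x))) as [W [[l [Hl ->]] HsW]].
    + intros W [l [Hl ->]]. apply open_list. intros U HUl; apply HF, Hl; auto.
    + exists (fun x => exists U, In U nil /\ U x). exists nil. split; auto. intros U [].
    + intros W1 W2 [l1 [Hl1 ->]] [l2 [Hl2 ->]].
      exists (fun x => exists U, In U (l1 ++ l2) /\ U x). split.
      * exists (l1 ++ l2). split; auto. intros U HUa. apply in_app_or in HUa. destruct HUa; auto.
      * split; intros x [U [HUl HUx]]; exists U; split; auto; apply in_or_app; auto.
    + intros x Hx. destruct (Hn x Hx) as [U [HFU HUx]].
      exists (fun y => exists V0, In V0 (U :: nil) /\ V0 y). split.
      * exists (U :: nil). split; auto. intros V0 [<-|[]]; auto.
      * exists U. simpl; auto.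
    + exists l. split; auto. intros x Hx. apply HsW. apply Hx.
  - intros x y Hx Hxy n. apply (spec_open (Wn n) x y); auto.
Qed.

Lemma sat_sep K x : saturated O K -> ~ K x ->
  exists V, O V /\ subset K V /\ ~ V x.
Proof.
  intros Hs Hx.
  exists (fun y => exists U, (O U /\ ~ U x) /\ U y). split; [|split].
  - apply open_union. intros U [HU _]; auto.
  - intros k Hk. assert (Hn : ~ spec_le O k x) by (intro H; apply Hx; apply (Hs k x); auto).
    unfold spec_le, closure in Hn. apply not_all_ex_not in Hn. destruct Hn as [U Hn].
    exists U. split; [split|].
    + apply NNPP; intro H; apply Hn; intro; contradiction.
    + intro Hux. apply Hn. intros _ _. exists x; auto.
    + apply NNPP; intro H. apply Hn. intros _ Hk'. contradiction.
  - intros [U [[_ Hn] Hu]]. auto.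
Qed.

End Topo.

Theorem mainTheorem18 (X : Type) (O : (X -> Prop) -> Prop) :
  is_topology O -> T0 O -> core_compact O -> well_filtered O ->
  forall W : (X -> Prop) -> Prop, subset W (KX O) ->
    (upper_vietoris_open O W <-> scott_open_K O W).
Proof.
  intros HT _ HC HWF W HWK. split.
  - intros [_ HV]. split; [exact HWK|split].
    + intros K1 K2 HK1 HK2 Hle. destruct (HV K1 HK1) as [U [HU [HK1U Hbox]]].
      apply Hbox; auto. intros x Hx. apply HK1U. apply Hle. auto.
    + intros D S [HDK [HDne HDd]] [HSK [HSub HSl]] HWS.
      destruct (HV S HWS) as [U [HU [HSU Hbox]]].
      pose (I := fun x => forall K, D K -> K x).
      assert (HI : KX O I).
      { split; [|split].
        - apply NNPP; intro Hne.
          destruct (HWF (fun x => exists U : X -> Prop, False /\ U x) D) as [K [HK HKe]].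
          + apply open_union; auto. tauto.
          + exact HDK.
          + exact HDne.
          + intros K1 K2 H1 H2. destruct (HDd K1 K2 H1 H2) as [K3 [H3 [A B]]]. eauto.
          + intros x Hx. exfalso. apply Hne. exists x. exact Hx.
          + destruct (HDK K HK) as [[x Hx] _]. destruct (HKe x Hx) as [? [[] _]].
        - intros F HF Hcov.
          destruct (HWF (fun x => exists U, F U /\ U x) D) as [K [HK HKF]].
          + apply open_union; auto.
          + exact HDK.
          + exact HDne.
          + intros K1 K2 H1 H2. destruct (HDd K1 K2 H1 H2) as [K3 [H3 [A B]]]. eauto.
          + exact Hcov.
          + destruct (HDK K HK) as [_ [HKc _]].
            destruct (HKc F HF HKF) as [l [Hl Hlc]]. exists l. split; [exact Hl|].
            intros x Hx. apply Hlc. apply Hx. auto.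
        - intros x y Hx Hxy K HK. destruct (HDK K HK) as [_ [_ Hs]]. apply (Hs x y); [apply Hx; exact HK|exact Hxy]. }
      assert (HIS : subset I S).
      { apply (HSl I HI). intros K HK x Hx. apply Hx. auto. }
      assert (Hfil : forall K1 K2, D K1 -> D K2 -> exists K3, D K3 /\ subset K3 K1 /\ subset K3 K2).
      { intros K1 K2 H1 H2. destruct (HDd K1 K2 H1 H2) as [K3 [H3 [A B]]]. eauto. }
      assert (HIU : subset (fun x => forall K, D K -> K x) U).
      { intros x Hx. apply HSU. apply HIS. exact Hx. }
      destruct (HWF U D HU HDK HDne Hfil HIU) as [K [HK HKU]].
      exists K. split; [exact HK|apply Hbox; [apply HDK; exact HK|exact HKU]].
  - intros [_ [Hup Hsc]]. split; [exact HWK|].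
    intros K HK. destruct (HWK K HK) as [HKne [HKc HKs]].
    pose (D := fun Q => KX O Q /\ exists U, O U /\ subset K U /\ subset U Q).
    assert (HD : forall V, O V -> subset K V -> exists Q, D Q /\ subset Q V).
    { intros V HV HKV. destruct (local_compact X O HT HC HWF K V HKc HV HKV)
        as [U [Q [HU [HKU [HUQ [HQV [HQc HQs]]]]]]].
      exists Q. split; auto. split; [|eauto]. split; auto.
      destruct HKne as [x Hx]. exists x. auto. }
    destruct (Hsc D K) as [Q [[HQK [U [HU [HKU HUQ]]]] HWQ]].
    + split; [|split].
      * intros Q [HQ _]; auto.
      * destruct (HD (fun _ => True) (open_full X O HT)) as [Q [HQ _]]. intros x _; auto. eauto.
      * intros K1 K2 [_ [U1 [HU1 [HK1 HU1Q]]]] [_ [U2 [HU2 [HK2 HU2Q]]]].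
        destruct (HD (fun x => U1 x /\ U2 x) (open_inter X O HT U1 U2 HU1 HU2)) as [Q [HQ HQs]].
        { intros x Hx; auto. }
        exists Q. split; auto. split; intros x Hx; destruct (HQs x Hx); auto.
    + split; [exact (HWK K HK)|split].
      * intros Q [_ [U [_ [HKU HUQ]]]] x Hx. auto.
      * intros S' HS' Hub x Hx. apply NNPP; intro HnK.
        destruct (sat_sep X O HT K x HKs HnK) as [V [HV [HKV HVx]]].
        destruct (HD V HV HKV) as [Q [HQ HQV]].
        apply HVx. apply HQV. apply (Hub Q HQ). auto.
    + exact HK.
    + exists U. split; auto. split; auto. intros K' HK' HK'U.
      apply (Hup Q K' HWQ HK'). intros x Hx. auto.
Qed.
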